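(* Let $\{\Pi_{\bm{x}}\}_{\bm{x}\in\{0,1\}^n}$ be a POVM on $(\mathbb{C}^2)^{\otimes n}$. For $\theta\in\mathbb{R}$ let $|\Phi_\theta\rangle=|+_\theta\rangle^{\otimes n}$ with $|+_\theta\rangle=(|0\rangle+e^{i\theta}|1\rangle)/\sqrt2$, let $W^\theta_\Phi=\frac{1}{2^n}\mathbb{1}-|\Phi_\theta\rangle\langle\Phi_\theta|$, and let $\mathscr{Q}^\theta_\Phi(\Pi_{\bm{x}})=2^n\,|\operatorname{tr}[W^\theta_\Phi\Pi_{\bm{x}}]|$. Then for every $\bm{x}$, $$\mathscr{Q}^\theta_\Phi(\Pi_{\bm{x}})=2\left|\sum_{\bm{y}<\bm{z}}\Big(-\operatorname{Re}[\Pi_{\bm{x}}(\bm{y},\bm{z})]\cos[h(\bm{y},\bm{z})\theta]+\operatorname{Im}[\Pi_{\bm{x}}(\bm{y},\bm{z})]\sin[h(\bm{y},\bm{z})\theta]\Big)\right|,$$ where $h(\bm{y},\bm{z})=|\bm{z}|-|\bm{y}|$.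
   Context: $\Pi(\bm{y},\bm{z})=\langle\bm{y}|\Pi|\bm{z}\rangle$ is the entry in row $\bm{y}$, column $\bm{z}$ with respect to the computational basis $\{|\bm{y}\rangle:\bm{y}\in\{0,1\}^n\}$; $|\bm{y}|$ is the Hamming weight of $\bm{y}$; the sum over $\bm{y}<\bm{z}$ runs over all pairs of distinct bit strings with respect to a fixed total order (e.g. lexicographic), so that each unordered pair is counted once. *)

(* Defs.v *)
From mathcomp Require Import all_boot all_order all_algebra.
From mathcomp Require Import reals trigo.
From mathcomp.real_closed Require Export complex.

Set Implicit Arguments.
Unset Strict Implicit.
Unset Printing Implicit Defensive.

Import Order.TTheory GRing.Theory Num.Theory.
Local Open Scope ring_scope.

(* Bit strings of length n: the computational basis of (C^2)^{⊗ n}. *)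
Definition bits (n : nat) : finType := {ffun 'I_n -> bool}.

(* Operators on (C^2)^{⊗ n}, given by their entries  A(y,z) = <y|A|z>. *)
Definition op (R : realType) (n : nat) := bits n -> bits n -> R[i].

Definition hw (n : nat) (y : bits n) : nat := #|[set i | y i]|.

Definition hdiff (n : nat) (y z : bits n) : int := (hw z)%:Z - (hw y)%:Z.

Definition bits_lt (n : nat) (y z : bits n) : bool :=
  (enum_rank y < enum_rank z)%N.

Definition id_op (R : realType) (n : nat) : op R n :=
  fun y z => if y == z then 1 else 0.

(* Hermitian adjoint (complex conjugate transpose) is implicit below;
   positive semidefiniteness: <v|A|v> >= 0 (real, nonnegative) for all v. *)
Definition psd (R : realType) (n : nat) (A : op R n) : Prop :=
  forall v : bits n -> R[i],
    0 <= \sum_(y : bits n) \sum_(z : bits n) conjc (v y) * A y z * v z.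

Definition POVM (R : realType) (n : nat) (Pi : bits n -> op R n) : Prop :=
  (forall x, psd (Pi x)) /\
  (forall y z, \sum_(x : bits n) Pi x y z = @id_op R n y z).

Definition tr_mul (R : realType) (n : nat) (A B : op R n) : R[i] :=
  \sum_(y : bits n) \sum_(z : bits n) A y z * B z y.

Definition plus_theta (R : realType) (theta : R) (b : bool) : R[i] :=
  (if b then Complex (cos theta) (sin theta) else 1) / Complex (Num.sqrt (2 : R)) 0.

Definition Phi (R : realType) (n : nat) (theta : R) (y : bits n) : R[i] :=
  \prod_(i < n) plus_theta theta (y i).

Definition W (R : realType) (n : nat) (theta : R) : op R n :=
  fun y z => (2 ^+ n)^-1 * @id_op R n y z - Phi theta y * conjc (Phi theta z).

(* Q^θ_Φ(A) = 2^n |tr[W^θ_Φ A]|, a real number (real part of the complex modulus, which is real). *)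
Definition Qwit (R : realType) (n : nat) (theta : R) (A : op R n) : R :=
  2 ^+ n * complex.Re `|tr_mul (W theta) A|.

(* Main.v *)
Require Import Defs.
From mathcomp Require Import all_boot all_order all_algebra.
From mathcomp Require Import reals trigo.
From mathcomp.real_closed Require Import complex.
From mathcomp Require Import ring lra.
Import Order.TTheory GRing.Theory Num.Theory.
Local Open Scope ring_scope.

Section H.
Variables (R : realType) (n : nat).

Lemma sum1 (F : bits n -> R[i]) y : (forall a, a != y -> F a = 0) -> \sum_a F a = F y.
Proof. move=> H; rewrite (bigD1 y) //= big1 ?addr0 // => a /H; done. Qed.

Lemma sum2 (F : bits n -> R[i]) y z : y != z ->
  (forall a, a != y -> a != z -> F a = 0) -> \sum_a F a = F y + F z.
Proof.
move=> yz H; rewrite (bigD1 y) //= (bigD1 z) /=; last by rewrite eq_sym.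
by rewrite big1 ?addr0 // => a /andP[az ay]; apply: H.
Qed.

Lemma psd_Im0 (A : op R n) y : psd A -> complex.Im (A y y) = 0.
Proof.
move=> /(_ (fun a => if a == y then 1 else 0)).
rewrite (@sum1 _ y); last by move=> a /negbTE ->; apply: big1 => b _; rewrite conjc0 !mul0r.
rewrite (@sum1 _ y); last by move=> b /negbTE ->; rewrite mulr0.
rewrite eqxx conjc1 mul1r mulr1 lecE => /andP[/eqP H _]; exact: H.
Qed.

Lemma psd_herm (A : op R n) y z : psd A -> A z y = conjc (A y z).
Proof.
move=> hA; have [->|yz] := eqVneq y z.
  by have := @psd_Im0 A z hA; case: (A z z) => a b /= ->; rewrite oppr0.
have zy : z != y by rewrite eq_sym.
have key : forall al be : R[i], complex.Im (conjc al * A y y * al + conjc al * A y z * be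
   + conjc be * A z y * al + conjc be * A z z * be) = 0.
  move=> al be; have := hA (fun a => if a == y then al else if a == z then be else 0).
  rewrite (@sum2 _ y z yz); last first.
    by move=> a /negbTE -> /negbTE ->; apply: big1 => b _; rewrite conjc0 !mul0r.
  rewrite (@sum2 _ y z yz); last by move=> b /negbTE -> /negbTE ->; rewrite mulr0.
  rewrite (@sum2 _ y z yz); last by move=> b /negbTE -> /negbTE ->; rewrite mulr0.
  rewrite eqxx (negbTE zy) eqxx lecE => /andP[/eqP H _].
  by move: H; rewrite !addrA /= => ->.
have k1 := key 1 1; have k2 := key 1 'i%C.
have d1 := @psd_Im0 A y hA; have d2 := @psd_Im0 A z hA.
move: k1 k2 d1 d2; case: (A y y) => a1 b1; case: (A y z) => a2 b2;
  case: (A z y) => a3 b3; case: (A z z) => a4 b4 /=.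
move=> k1 k2 d1 d2; f_equal; lra.
Qed.

Lemma bits_lt_irr (y : bits n) : bits_lt y y = false.
Proof. by rewrite /bits_lt ltnn. Qed.

Lemma split_sum (g : bits n -> bits n -> R[i]) :
  \sum_y \sum_z g y z = \sum_y g y y + \sum_y \sum_(z | bits_lt y z) (g y z + g z y).
Proof.
have e1 : forall y, \sum_z g y z = g y y + (\sum_(z | bits_lt y z) g y z + \sum_(z | bits_lt z y) g y z).
  move=> y; rewrite (bigD1 y) //=; congr (_ + _).
  rewrite (bigID (fun z => bits_lt y z)) /=; congr (_ + _); apply: eq_bigl => z;
  rewrite /bits_lt; (case: (eqVneq z y) => [->|ne] /=; first by rewrite ltnn) => //.
  rewrite -leqNgt leq_eqVlt; case: eqP => //= e; case/eqP: ne.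
  by apply/enum_rank_inj/val_inj.
rewrite (eq_bigr _ (fun y _ => e1 y)) big_split /=; congr (_ + _).
rewrite [in RHS](eq_bigr (fun y => \sum_(z | bits_lt y z) g y z + \sum_(z | bits_lt y z) g z y)); last by move=> y _; rewrite big_split.
rewrite !big_split /=; congr (_ + _).
rewrite (eq_bigr (fun y => \sum_z (if bits_lt z y then g y z else 0))); last by move=> y _; rewrite big_mkcond.
rewrite exchange_big /=; apply: eq_bigr => y _; by rewrite [RHS]big_mkcond.
Qed.

Definition E1 (t : R) : R[i] := Complex (cos t) (sin t).

Lemma E1X (t : R) k : E1 t ^+ k = Complex (cos (k%:R * t)) (sin (k%:R * t)).
Proof.
elim: k => [|k IH]; first by rewrite expr0 mul0r cos0 sin0.
rewrite exprS IH /E1 -addn1 natrD mulrDl mul1r cosD sinD /=.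
congr Complex; ring.
Qed.

Definition ks : R := ((Num.sqrt (2:R))^-1) ^+ n.

Lemma ks2 : ks * ks = ((2:R) ^+ n)^-1.
Proof.
rewrite /ks -exprMn -invfM -expr2 sqr_sqrtr ?ler0n // exprVn //.
Qed.

Lemma PhiE (t : R) (y : bits n) :
  Phi t y = Complex (ks * cos ((hw y)%:R * t)) (ks * sin ((hw y)%:R * t)).
Proof.
rewrite /Phi /plus_theta big_split /= prodr_const card_ord.
have -> : \prod_(i < n) (if y i then Complex (cos t) (sin t) else 1) = E1 t ^+ hw y.
  rewrite -big_mkcond /= prodr_const /hw; congr (_ ^+ _); apply: eq_card => i; rewrite inE //.
rewrite E1X.
have -> : (Complex (Num.sqrt (2:R)) 0)^-1 ^+ n = real_complex R ks.
  by rewrite /ks rmorphXn rmorphV //= unitfE sqrtr_eq0 -ltNge ltr0n.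
rewrite /=; congr Complex; ring.
Qed.

Lemma hdiffE (y z : bits n) (t : R) : (hdiff y z)%:~R * t = (hw z)%:R * t - (hw y)%:R * t.
Proof. by rewrite /hdiff intrB !pmulrn mulrBl. Qed.

Lemma diag0 (t : R) (A : op R n) y : W t y y * A y y = 0.
Proof.
rewrite /W /id_op eqxx mulr1 PhiE.
have -> : ((2:R[i]) ^+ n)^-1 = real_complex R (((2:R) ^+ n)^-1).
  by rewrite rmorphV ?rmorphXn ?rmorph_nat // unitfE expf_neq0 // pnatr_eq0.
rewrite -ks2.
have := cos2Dsin2 ((hw y)%:R * t); move: (cos _) (sin _) => c s H.
have -> : real_complex R (ks * ks) - Complex (ks * c) (ks * s) * conjc (Complex (ks * c) (ks * s)) = 0.
  apply/eqP; rewrite eq_complex /=; apply/andP; split; apply/eqP.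
    transitivity (ks * ks * (1 - (c^+2 + s^+2))); first by ring.
    by rewrite H subrr mulr0.
  ring.
by rewrite mul0r.
Qed.

Lemma pairE (t : R) (A : op R n) y z : (forall y z, A z y = conjc (A y z)) -> y != z ->
  W t y z * A z y + W t z y * A y z =
  real_complex R (2 * ((2:R) ^+ n)^-1 * (- complex.Re (A y z) * cos ((hdiff y z)%:~R * t)
            + complex.Im (A y z) * sin ((hdiff y z)%:~R * t))).
Proof.
move=> herm yz; have zy : z != y by rewrite eq_sym.
rewrite /W /id_op (negbTE yz) (negbTE zy) !mulr0 !sub0r !PhiE (herm y z) hdiffE cosB sinB -ks2.
case: (A y z) => p q /=.
apply/eqP; rewrite eq_complex /=; apply/andP; split; apply/eqP; ring.
Qed.

End H.

Theorem theorem1 (R : realType) (n : nat) (Pi : bits n -> op R n)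
  (hPi : POVM Pi) (theta : R) (x : bits n) :
  Qwit theta (Pi x) =
  2 * `| \sum_(y : bits n) \sum_(z : bits n | bits_lt y z)
          ( - complex.Re (Pi x y z) * cos ((hdiff y z)%:~R * theta)
            + complex.Im (Pi x y z) * sin ((hdiff y z)%:~R * theta)) |.
Proof.
have herm : forall y z, Pi x z y = conjc (Pi x y z).
  by move=> y z; apply: psd_herm; case: hPi => h _; apply: h.
rewrite /Qwit /tr_mul split_sum big1 ?add0r; last by move=> y _; apply: diag0.
rewrite (eq_bigr (fun y => \sum_(z | bits_lt y z) real_complex R (2 * ((2:R) ^+ n)^-1 *
     (- complex.Re (Pi x y z) * cos ((hdiff y z)%:~R * theta)
            + complex.Im (Pi x y z) * sin ((hdiff y z)%:~R * theta))))); last first.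
  move=> y _; apply: eq_bigr => z yz; apply: pairE => //.
  by apply/eqP => e; move: yz; rewrite e bits_lt_irr.
under eq_bigr do rewrite -rmorph_sum.
rewrite -rmorph_sum normc_def /= expr0n /= addr0 sqrtr_sqr.
under eq_bigr do rewrite -mulr_sumr.
rewrite -mulr_sumr normrM ger0_norm; last by rewrite mulr_ge0 // invr_ge0 exprn_ge0.
by rewrite mulrA mulrCA mulfV ?mulr1 // expf_neq0 // pnatr_eq0.
Qed.
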